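(* Let $K$ be an algebraically closed field of characteristic zero, $\mathcal{K} = K(t)$, and fix integers $d \ge 2$ and $N \ge 1$. Then $0$ does not realize portrait $(1,N)$ for $f_d(z) = z^d+t$.
   Context: For $c \in K$, let $f_{d,c}(z) = z^d+c$. A point $x$ has preperiodic portrait $(M,N)$ for $\phi$ if $M\ge0$ is minimal with $\phi^M(x)$ periodic and $\phi^M(x)$ has exact period $N$. We say $\alpha\in\mathcal{K}$ realizes portrait $(M,N)$ for $f_d$ if there exists $c \in K$ such that $\alpha(c)$ (reduction modulo the place $t=c$) has portrait $(M,N)$ for $f_{d,c}$. *)

(* Defs.v *)
From HB Require Import structures.
From mathcomp Require Import all_boot all_order all_algebra.
Set Implicit Arguments. Unset Strict Implicit. Unset Printing Implicit Defensive.
Import Order.TTheory GRing.Theory Num.Theory.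
Local Open Scope ring_scope.

Definition fdc (K : nzRingType) (d : nat) (c : K) (z : K) : K := z ^+ d + c.

Definition is_periodic (T : Type) (phi : T -> T) (x : T) : Prop :=
  exists n : nat, (0 < n)%N /\ iter n phi x = x.

Definition exact_period (T : Type) (phi : T -> T) (x : T) (N : nat) : Prop :=
  (0 < N)%N /\ iter N phi x = x /\
  forall k : nat, (0 < k)%N -> (k < N)%N -> iter k phi x <> x.

Definition has_portrait (T : Type) (phi : T -> T) (x : T) (M N : nat) : Prop :=
  is_periodic phi (iter M phi x) /\
  (forall m : nat, (m < M)%N -> ~ is_periodic phi (iter m phi x)) /\
  exact_period phi (iter M phi x) N.

(* Reduction of alpha in K(t) modulo the place t = c: alpha = p/q with
   q(c) <> 0, reduced value p(c)/q(c). *)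
Definition reduces_to (K : fieldType) (alpha : {fraction {poly K}}) (c v : K) : Prop :=
  exists p q : {poly K}, q.[c] != 0 /\ alpha = FracField.tofrac p / FracField.tofrac q /\ v = p.[c] / q.[c].

Definition realizes (K : fieldType) (d : nat) (alpha : {fraction {poly K}}) (M N : nat) : Prop :=
  exists c v : K, reduces_to alpha c v /\ has_portrait (fdc d c) v M N.

(* Main.v *)
Require Import Defs.
From HB Require Import structures.
From mathcomp Require Import all_boot all_order all_algebra.
From mathcomp Require Import fraction.
Import GRing.Theory.
Local Open Scope ring_scope.

Theorem corollary3p5 (K : closedFieldType) (hK : [pchar K] =i pred0)
  (d N : nat) (hd : (2 <= d)%N) (hN : (1 <= N)%N) :
  ~ realizes d (0 : {fraction {poly K}}) 1 N.
Proof.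
move=> [c [v [[p [q [qc [ha hv]]]] [hper [hmin _]]]]].
have qn0 : q != 0 by apply: contraNneq qc => ->; rewrite horner0.
have tq : FracField.tofrac q != 0 by rewrite tofrac_eq0.
have tp : FracField.tofrac p = 0.
  by move/eqP: ha; rewrite eq_sym mulf_eq0 invr_eq0 (negPf tq) orbF => /eqP.
have p0 : p = 0 by apply/eqP; rewrite -tofrac_eq0 tp.
have v0 : v = 0 by rewrite hv p0 horner0 mul0r.
apply: (hmin 0%N) => //=.
move: hper => [n [n0 hn]]; exists n; split => //.
rewrite v0 /=; rewrite v0 /= in hn.
move: hn; case: n n0 => // n _; rewrite iterS => hn.
rewrite iterSr /=.
have : (fdc d c 0) = c by rewrite /fdc expr0n /= (gtn_eqF (ltn_trans _ hd)) // add0r.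
move=> e; rewrite e in hn *.
move: hn; rewrite /fdc => /eqP; rewrite -subr_eq0 addrK expf_eq0 => /andP[_ /eqP ->].
by [].
Qed.
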